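(* Let $(M,\mathrm{d})$ be a metric space, $\mathcal X$ a set, $\mathcal S\subseteq M^{\mathcal X}$, $\tau>0$, and let $\mathcal Z:\mathcal S\to\mathcal P(\mathcal T)$ be a learning problem. Let $\mu$ be a probability measure over $\mathcal S$. Suppose there is a deterministic algorithm $\mathcal A$ that learns $\mathcal Z$ with probability $\beta$ over the instance $s\sim\mu$ from $q$ many $\tau$-accurate evaluation queries. Then for any $f\in M^{\mathcal X}$ it holds $$q\geq\frac{\beta-\sup_{t\in\mathcal T}\Pr_{s\sim\mu}[s\in\mathcal Z_t]}{\max_{x\in\mathcal X}\Pr_{s\sim\mu}\left[\mathrm{d}(s(x),f(x))>\tau\right]}.$$
   Context: A learning problem is a map $\mathcal Z:\mathcal S\to\mathcal P(\mathcal T)$ into the power set of a target set $\mathcal T$; given oracle access to an unknown source $s\in\mathcal S$, the task is to output some $t\in\mathcal Z(s)$. For $t\in\mathcal T$, $\mathcal Z_t=\{s\in\mathcal S: t\in\mathcal Z(s)\}$. For $s\in M^{\mathcal X}$ and $\tau>0$, the evaluation oracle $\mathrm{Eval}_\tau(s)$, when queried with $x\in\mathcal X$, returns some $v\in M$ with $\mathrm{d}(v,s(x))\le\tau$ (any such value may be returned); such a query is a $\tau$-accurate evaluation query. A deterministic algorithm learns $\mathcal Z$ with probability $\beta$ over $s\sim\mu$ from $q$ queries if $\Pr_{s\sim\mu}[\mathcal A$ with access to $\mathrm{Eval}_\tau(s)$ outputs an element of $\mathcal Z(s)$ using at most $q$ queries$]\ge\beta$, where success is required for every valid behaviour of the oracle.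 *)

(* Defs.v *)
From HB Require Import structures.
From mathcomp Require Import all_boot all_order all_algebra.
From mathcomp Require Import all_classical all_reals all_analysis.
Set Implicit Arguments. Unset Strict Implicit. Unset Printing Implicit Defensive.
Import Order.TTheory GRing.Theory Num.Theory.
Local Open Scope classical_set_scope.
Local Open Scope ring_scope.

Definition is_metric (R : realType) (M : Type) (dist : M -> M -> R) : Prop :=
  [/\ forall x y, 0 <= dist x y,
      forall x y, dist x y = 0 <-> x = y,
      forall x y, dist x y = dist y x &
      forall x y z, dist x z <= dist x y + dist y z].

(* A deterministic (adaptive) algorithm: given the answers received so far,
   it either issues a query x : X (inl x) or outputs a target t : T (inr t). *)
Definition algorithm (X M T : Type) := seq M -> X + T.

(* [succeeds_within dist tau A sx good n h]: started from answer history h,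
   the algorithm A, interacting with Eval_tau(sx), outputs an element of
   [good] using at most n further queries, for EVERY valid behaviour of the
   oracle (i.e. for every answer v with dist v (sx x) <= tau to each query x). *)
Fixpoint succeeds_within (R : realType) (X M T : Type)
    (dist : M -> M -> R) (tau : R) (A : algorithm X M T)
    (sx : X -> M) (good : set T) (n : nat) (h : seq M) : Prop :=
  match A h with
  | inr t => good t
  | inl x =>
      match n with
      | 0 => False
      | n'.+1 => forall v : M, dist v (sx x) <= tau ->
                   succeeds_within dist tau A sx good n' (rcons h v)
      end
  end.

Definition Zt (S T : Type) (Z : S -> set T) (t : T) : set S := [set s | Z s t].

(* Supremum of a family of probabilities (values in [0,1]); 0 is adjoined so
   that the empty family has supremum 0 (it never changes a nonempty sup). *)
Definition sup_prob (R : realType) (I : Type) (p : I -> \bar R) : \bar R :=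
  ereal_sup ([set 0%E] `|` range p).

(* Main.v *)
Require Import Defs.
From HB Require Import structures.
From mathcomp Require Import all_boot all_order all_algebra.
From mathcomp Require Import all_classical all_reals all_analysis.
Import Order.TTheory GRing.Theory Num.Theory.
Local Open Scope classical_set_scope.
Local Open Scope ring_scope.

Fixpoint InL {X : Type} (x : X) (l : seq X) : Prop :=
  match l with [::] => False | y :: l' => y = x \/ InL x l' end.

Fixpoint run {X M T : Type} (A : algorithm X M T) (f : X -> M) (n : nat) (h : seq M)
  : seq X * option T :=
  match A h with
  | inr t => ([::], Some t)
  | inl x => match n with
             | 0 => ([::], None)
             | n'.+1 => let p := run A f n' (rcons h (f x)) in (x :: p.1, p.2)
             end
  end.

Lemma run_size {X M T : Type} (A : algorithm X M T) f n h :
  (size (run A f n h).1 <= n)%N.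
Proof.
elim: n h => [|n IH] h /=; first by case: (A h).
by case: (A h) => //= x; exact: IH.
Qed.

Lemma run_key {R : realType} {M X T : Type} {dist : M -> M -> R}
  (hsym : forall x y, dist x y = dist y x) {tau : R}
  {A : algorithm X M T} {sx : X -> M} {good : set T} (f : X -> M) {n h} :
  succeeds_within dist tau A sx good n h ->
  (match (run A f n h).2 with Some t => good t | None => False end) \/
  exists x, InL x (run A f n h).1 /\ tau < dist (sx x) (f x).
Proof.
elim: n h => [|n IH] h /=.
  by case: (A h) => //= t Ht; left.
case: (A h) => [x|t] /=; last by move=> Ht; left.
move=> H.
have [lt|nlt] := boolP (tau < dist (sx x) (f x)).
  by right; exists x; split => //; left.
have : dist (f x) (sx x) <= tau by rewrite hsym leNgt.
move/H/IH => [Hg|[y [Hy Hd]]]; first by left.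
by right; exists y; split => //; right.
Qed.

Theorem mainTheorem1
  (R : realType) (M X T : Type) (dist : M -> M -> R) (hdist : is_metric dist)
  (d : measure_display) (S : measurableType d) (emb : S -> (X -> M))
  (emb_inj : injective emb)
  (tau : R) (htau : 0 < tau)
  (Z : S -> set T) (mu : probability S R)
  (A : algorithm X M T) (beta : R) (q : nat)
  (f : X -> M)
  (meas_succ : measurable [set s | succeeds_within dist tau A (emb s) (Z s) q [::]])
  (meas_Zt : forall t : T, measurable (Zt Z t))
  (meas_far : forall x : X, measurable [set s | tau < dist (emb s x) (f x)])
  (hlearn : (beta%:E <= mu [set s | succeeds_within dist tau A (emb s) (Z s) q [::]])%E) :
  (beta%:E - sup_prob (fun t : T => mu (Zt Z t))
    <= q%:R%:E * sup_prob (fun x : X => mu [set s | (tau < dist (emb s x) (f x))%R]))%E.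
Proof.
case: hdist => _ _ hsym _.
set s1 := sup_prob _.
set s2 := sup_prob _.
have s1ge0 : (0 <= s1)%E by apply: ereal_sup_ubound; left.
have s2ge0 : (0 <= s2)%E by apply: ereal_sup_ubound; left.
have s1le1 : (s1 <= 1)%E.
  apply/ereal_supP => y [->|[t _ <-]]; first exact: lee01.
  exact: probability_le1.
have s1fin : s1 \is a fin_num by rewrite ge0_fin_numE // (le_lt_trans s1le1) // ltry.
set G : set S := match (run A f q [::]).2 with Some t => Zt Z t | None => set0 end.
have mG : measurable G by rewrite /G; case: (run A f q [::]).2.
have muG : (mu G <= s1)%E.
  rewrite /G; case: (run A f q [::]).2 => [t|]; last by rewrite measure0.
  by apply: ereal_sup_ubound; right; exists t.
pose U (qs : seq X) : set S := [set s | exists x, InL x qs /\ tau < dist (emb s x) (f x)].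
have mU : forall qs, measurable (U qs).
  elim=> [|x qs IH].
    by rewrite (_ : U [::] = set0) //; apply/seteqP; split => s //= [y []].
  rewrite (_ : U (x :: qs) = [set s | tau < dist (emb s x) (f x)] `|` U qs).
    exact: measurableU.
  apply/seteqP; split => s /=.
    by move=> [y [[<-|Hy] Hd]]; [left|right; exists y].
  by move=> [Hd|[y [Hy Hd]]]; [exists x; split => //; left | exists y; split => //; right].
have muU : forall qs, (mu (U qs) <= (size qs)%:R%:E * s2)%E.
  elim=> [|x qs IH].
    by rewrite (_ : U [::] = set0) ?measure0 ?mul0e //; apply/seteqP; split => s //= [y []].
  rewrite (_ : U (x :: qs) = [set s | tau < dist (emb s x) (f x)] `|` U qs); last first.
    apply/seteqP; split => s /=.
      by move=> [y [[<-|Hy] Hd]]; [left|right; exists y].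
    by move=> [Hd|[y [Hy Hd]]]; [exists x; split => //; left | exists y; split => //; right].
  apply: (le_trans (measureU2 _ _ _)) => //.
  rewrite /= -addn1 natrD EFinD addeC ge0_muleDl // mul1e.
  apply: leeD => //.
  by apply: ereal_sup_ubound; right; exists x.
have sub : [set s | succeeds_within dist tau A (emb s) (Z s) q [::]] `<=` G `|` U (run A f q [::]).1.
  move=> s /= /(run_key hsym f) [Hg|[x Hx]]; last by right; exists x.
  by left; move: Hg; rewrite /G; case: (run A f q [::]).2.
have : (beta%:E <= s1 + q%:R%:E * s2)%E.
  apply: (le_trans hlearn); apply: (le_trans (le_measure _ _ _ sub)).
  - by rewrite inE.
  - by rewrite inE; apply: measurableU.
  apply: (le_trans (measureU2 _ _ _)) => //.
  apply: leeD; first exact: muG.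
  apply: (le_trans (muU _)).
  apply: lee_wpmul2r; first exact: s2ge0.
  rewrite lee_fin ler_nat; exact: run_size.
by rewrite leeBlDl.
Qed.
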